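(* Let $n\ge1$, $f\in A_{\vec 0}(\mathbb{D}^n)$ and $\alpha\in\mathbb{C}\setminus\{0\}$. Then no non-zero positive measure $\mu\in A_{\vec 0}(\mathbb{D}^n)^\perp$ has support contained in the level set $\{z\in\mathbb{T}^n: f(z)=\alpha\}$.
   Context: $A(\mathbb{D}^n)$ is the polydisc algebra (continuous on $\overline{\mathbb{D}}^n$, holomorphic on $\mathbb{D}^n$), regarded as a subspace of $C(\mathbb{T}^n)$. $A_{\vec 0}(\mathbb{D}^n)=\{z_1\cdots z_n f(z): f\in A(\mathbb{D}^n)\}$. $A_{\vec 0}(\mathbb{D}^n)^\perp$ is the set of complex Borel measures $\mu$ of bounded variation on $\mathbb{T}^n$ with $\int_{\mathbb{T}^n} g\,d\mu=0$ for all $g\in A_{\vec 0}(\mathbb{D}^n)$. *)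

(* Defs.v *)
(* mathcomp-analysis over an abstract R : realType,
   complex numbers are R[i] (mathcomp-real-closed), viewed as the normed
   space (R[i])^o over itself (so `derivable` = complex differentiability). *)
From HB Require Import structures.
From mathcomp Require Import all_boot all_order all_algebra.
From mathcomp Require Import complex.
From mathcomp Require Import all_classical all_reals all_analysis.
Set Implicit Arguments.
Unset Strict Implicit.
Unset Printing Implicit Defensive.
Import Order.TTheory GRing.Theory Num.Theory.
Import numFieldNormedType.Exports.
Local Open Scope ring_scope.
Local Open Scope classical_set_scope.

Notation CC R := ((R[i])^o).

(* Points of C^n are row vectors; z ord0 j is the j-th coordinate. *)
Definition torus (R : realType) (n : nat) : set 'rV[CC R]_n :=
  [set z | forall j : 'I_n, `|z ord0 j| = 1].
Definition closed_polydisc (R : realType) (n : nat) : set 'rV[CC R]_n :=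
  [set z | forall j : 'I_n, `|z ord0 j| <= 1].
Definition open_polydisc (R : realType) (n : nat) : set 'rV[CC R]_n :=
  [set z | forall j : 'I_n, `|z ord0 j| < 1].
Arguments torus : clear implicits.
Arguments closed_polydisc : clear implicits.
Arguments open_polydisc : clear implicits.

Definition upd (R : realType) (n : nat) (z : 'rV[CC R]_n) (j : 'I_n)
  (w : CC R) : 'rV[CC R]_n :=
  \row_(k < n) (if k == j then w else z ord0 k).

(* g in A(D^n): continuous on the closed polydisc and holomorphic on the
   open polydisc (holomorphic = complex differentiable in each variable
   separately; with continuity this is the usual notion, by Osgood). *)
Definition in_polydisc_alg (R : realType) (n : nat)
  (g : 'rV[CC R]_n -> CC R) : Prop :=
  {within closed_polydisc R n, continuous g} /\
  (forall z, open_polydisc R n z -> forall j : 'I_n,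
     derivable (fun w : CC R => g (upd z j w)) (z ord0 j) 1).

(* f in A_0(D^n), regarded as a function on T^n: f = z_1...z_n g on T^n
   for some g in A(D^n). *)
Definition in_polydisc_alg0 (R : realType) (n : nat)
  (f : 'rV[CC R]_n -> CC R) : Prop :=
  exists g, in_polydisc_alg g /\
    forall z, torus R n z -> f z = (\prod_(j < n) z ord0 j) * g z.

Notation borelCn R n := (g_sigma_algebraType (@open 'rV[CC R]_n)).

Definition cintegral (R : realType) (n : nat)
  (mu : {measure set (borelCn R n) -> \bar R})
  (D : set (borelCn R n)) (h : 'rV[CC R]_n -> CC R) : CC R :=
  ((\int[mu]_(x in D) complex.Re (h x))%:C + 'i * (\int[mu]_(x in D) complex.Im (h x))%:C)%C.

Definition msupport (R : realType) (n : nat)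
  (mu : {measure set (borelCn R n) -> \bar R}) : set 'rV[CC R]_n :=
  [set x | forall U : set 'rV[CC R]_n, open U -> U x -> (0 < mu U)%E].

Definition annihilates_A0 (R : realType) (n : nat)
  (mu : {measure set (borelCn R n) -> \bar R}) : Prop :=
  forall g, in_polydisc_alg0 g -> cintegral mu (torus R n) g = 0.

(* Main.v *)
Require Import Defs.
From HB Require Import structures.
From mathcomp Require Import all_boot all_order all_algebra.
From mathcomp Require Import complex.
From mathcomp Require Import all_classical all_reals all_analysis.
From mathcomp Require Import measurable_realfun.
From mathcomp Require Import ring lra.
Import Order.TTheory GRing.Theory Num.Theory.
Import numFieldNormedType.Exports.
Local Open Scope ring_scope.
Local Open Scope classical_set_scope.
Section H.
Variables (R : realType) (n : nat).
Local Notation X := (borelCn R n).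

Lemma open_meas (A : set X) : open (A : set 'rV[CC R]_n) -> measurable A.
Proof. by move=> oA; apply: sub_sigma_algebra. Qed.

Lemma closed_meas (A : set X) : closed (A : set 'rV[CC R]_n) -> measurable A.
Proof.
move=> cA; rewrite -[A]setCK; apply: measurableC; apply: open_meas.
exact: closed_openC.
Qed.

Lemma torus_closed : closed (torus R n).
Proof.
have -> : torus R n = \bigcap_(j in setT) ((fun z : 'rV[CC R]_n => `|z ord0 j|) @^-1` [set 1]).
  apply/seteqP; split => z /= H j.
    by move=> _; apply: H.
  by apply: (H j).
apply: closed_bigI => j _; apply: preimage_closed; last first.
  by apply: accessible_closed_set1; apply: hausdorff_accessible; exact: norm_hausdorff.
move=> z _; apply: continuous_comp; first exact: coord_continuous.
exact: norm_continuous.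
Qed.

Lemma cont_meas (D : set X) (h : 'rV[CC R]_n -> R) :
  measurable D -> {within (D : set 'rV[CC R]_n), continuous h} ->
  measurable_fun D (h : X -> R).
Proof.
move=> mD /continuousP ch.
apply: (measurability _ (RGenOpens.measurableE R)) => _ [_ [a [b ->] <-]].
have := ch `]a, b[%classic (@interval_open R (BRight a) (BLeft b) erefl erefl).
move=> /open_subspaceP [V oV VD].
rewrite setIC -VD; apply: measurableI => //; exact: open_meas.
Qed.

Lemma Re_cont : continuous (fun x : CC R => complex.Re x).
Proof.
move=> x A /= /nbhs_ballP [e e0 hA].
apply/nbhs_ballP; exists e%:C%C; first by rewrite /= ltcR.
move=> y; rewrite -ball_normE /= => hy; apply: hA.
rewrite -ball_normE /=.
have h := normc_ge_Re (x - y); rewrite raddfB /= in h.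
by rewrite -ltcR; exact: le_lt_trans h hy.
Qed.

Lemma normc_ge_Im' (z : R[i]) : (`|complex.Im z|%:C <= `|z|)%C.
Proof.
rewrite normc_def lecR -sqrtr_sqr; apply: ler_wsqrtr.
by rewrite lerDr sqr_ge0.
Qed.

Lemma Im_cont : continuous (fun x : CC R => complex.Im x).
Proof.
move=> x A /= /nbhs_ballP [e e0 hA].
apply/nbhs_ballP; exists e%:C%C; first by rewrite /= ltcR.
move=> y; rewrite -ball_normE /= => hy; apply: hA.
rewrite -ball_normE /=.
have h := normc_ge_Im' (x - y); rewrite raddfB /= in h.
by rewrite -ltcR; exact: le_lt_trans h hy.
Qed.

Lemma prod_cont_s (s : seq 'I_n) :
  continuous (fun z : 'rV[CC R]_n => \prod_(j <- s) z ord0 j).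
Proof.
elim: s => [|j s IH].
  have -> : (fun z : 'rV[CC R]_n => \prod_(j <- [::]) z ord0 j) = fun _ => 1.
    by apply: funext => z; rewrite big_nil.
  exact: cst_continuous.
have -> : (fun z : 'rV[CC R]_n => \prod_(j0 <- j :: s) z ord0 j0) =
   (fun z => z ord0 j) \* (fun z => \prod_(j0 <- s) z ord0 j0).
  by apply: funext => z; rewrite big_cons.
move=> z; apply: continuousM; [ | exact: IH]. have := (@coord_continuous (R[i]^o) 1 n ord0 j z). move=> H; exact: H.
Qed.

Lemma prod_cont : continuous (fun z : 'rV[CC R]_n => \prod_(j < n) z ord0 j).
Proof. exact: prod_cont_s. Qed.

Lemma F_cont (g : 'rV[CC R]_n -> CC R) (p : CC R -> R) :
  continuous p ->
  {within closed_polydisc R n, continuous g} ->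
  {within torus R n, continuous (fun z => p ((\prod_(j < n) z ord0 j) * g z))}.
Proof.
move=> pc hg.
apply: (@continuous_subspaceW _ _ _ (closed_polydisc R n)).
  by move=> z Tz j; rewrite Tz.
apply/subspace_continuousP => x CPx.
move/subspace_continuousP: hg => /(_ x CPx) hgx.
rewrite /from_subspace in hgx *.
have h1 : (fun z : 'rV[CC R]_n => (\prod_(j < n) z ord0 j) * g z) @ within (closed_polydisc R n) (nbhs x) --> (\prod_(j < n) x ord0 j) * g x.
  have := (@cvgM (R[i]^o) _ _ _ (fun z : 'rV[CC R]_n => \prod_(j < n) z ord0 j) g _ _ _ hgx).
  move=> H.
  have hp : (fun z : 'rV[CC R]_n => \prod_(j < n) z ord0 j) @ within (closed_polydisc R n) (nbhs x) --> \prod_(j < n) x ord0 j.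
    apply: cvg_within_filter; exact: prod_cont.
  exact: (H _ _ hp).
have h2 := pc ((\prod_(j < n) x ord0 j) * g x).
exact: (cvg_comp (fun z : 'rV[CC R]_n => (\prod_(j < n) z ord0 j) * g z) p h1 h2).
Qed.

Lemma f_meas (g f : 'rV[CC R]_n -> CC R) (p : CC R -> R) :
  continuous p ->
  {within closed_polydisc R n, continuous g} ->
  (forall z, torus R n z -> f z = (\prod_(j < n) z ord0 j) * g z) ->
  measurable_fun (torus R n : set X) (fun z => p (f z)).
Proof.
move=> pc hg hf.
have hm : measurable_fun (torus R n : set X) (fun z : X => p ((\prod_(j < n) z ord0 j) * g z)).
  apply: cont_meas; first exact: closed_meas (torus_closed).
  exact: F_cont.
move: hm; apply: eq_measurable_fun.
by move=> z; rewrite inE => Tz; rewrite hf.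
Qed.

Lemma int_const (mu : {measure set X -> \bar R}) (D K : set X) (h : X -> R) (c : R) :
  measurable D -> measurable K -> K `<=` D -> mu (D `\` K) = 0%E ->
  measurable_fun D h -> (forall x, K x -> h x = c) ->
  (\int[mu]_(x in D) (h x)%:E = c%:E * mu D)%E.
Proof.
move=> mD mK KD hN mh hc.
have mDK : measurable (D `\` K) by exact: measurableD.
have DE : D = K `|` (D `\` K) by rewrite setDUK.
have muD : mu D = mu K.
  rewrite [in LHS]DE measureU //.
  - by rewrite [X in _ + X](_ : _ = 0%E) ?adde0 //; exact: hN.
  - by rewrite setDIK.
rewrite muD [in LHS]DE integral_setU //; last 2 first.
- by rewrite -DE; apply/measurable_EFinP.
- by apply/disj_set2P; rewrite setDIK.
rewrite [X in (_ + X)%E]null_set_integral //; last first.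
  apply/(@measurable_EFinP _ _ _ _ h). exact: measurable_funS mh.
rewrite adde0 (eq_integral (fun _ => c%:E)); last first.
  by move=> x; rewrite inE => Kx; rewrite hc.
by rewrite integral_cst.
Qed.

Lemma norm_small (z : R[i]) (d : R) :
  `|complex.Re z| < d -> `|complex.Im z| < d -> `|z| < (d *+ 2)%:C%C.
Proof.
move=> hr hi; rewrite normc_def ltcR.
have d0 : 0 < d by exact: le_lt_trans (normr_ge0 _) hr.
move: hr hi; rewrite !ltr_norml => /andP[h1 h2] /andP[h3 h4].
have h : Num.sqrt (complex.Re z ^+ 2 + complex.Im z ^+ 2) < Num.sqrt ((d *+ 2) ^+ 2).
  rewrite ltr_sqrt; last by rewrite exprn_gt0 // pmulrn_lgt0.
  rewrite mulr2n; nra.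
by rewrite sqrtr_sqr ger0_norm in h; last by rewrite pmulrn_lge0 // ltW.
Qed.

Definition emb (Q : 'rV[rat * rat]_n) : 'rV[CC R]_n :=
  \row_j ((ratr (Q ord0 j).1 +i* ratr (Q ord0 j).2)%C : CC R).

Lemma mxball (x y : 'rV[CC R]_n) (e : R) : 0 < e ->
  (forall j, `|x ord0 j - y ord0 j| < e%:C%C) -> ball x e%:C%C y.
Proof.
move=> e0 H; rewrite /ball /=; split; first by rewrite ltcR.
by move=> i0 j; rewrite ord1 -ball_normE /=; exact: H.
Qed.

Lemma supp_null (mu : {measure set X -> \bar R}) :
  mu (~` msupport mu) = 0%E.
Proof.
set K := msupport mu.
pose I := ('rV[rat * rat]_n * rat)%type.
pose good (i : I) := (0 < (ratr i.2 : R)) /\ exists U : set X,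
   open (U : set 'rV[CC R]_n) /\ mu U = 0%E /\ ball (emb i.1) ((ratr i.2)%:C%C) `<=` U.
pose F (k : nat) : set X := match @unpickle I k with
  | Some i => if pselect (good i) then ball (emb i.1) ((ratr i.2)%:C%C) else set0
  | None => set0 end.
have mF k : measurable (F k).
  rewrite /F; case: (unpickle k) => [i|]; last exact: measurable0.
  case: pselect => ?; last exact: measurable0.
  apply: open_meas; exact: ball_open.
have F0 k : mu (F k) = 0%E.
  rewrite /F; case: (unpickle k) => [i|]; last exact: measure0.
  case: pselect => [[? [U [oU [mU bU]]]]|?]; last exact: measure0.
  apply: (@subset_measure0 _ _ _ mu _ U) => //.
  - apply: open_meas; exact: ball_open.
  - exact: open_meas.
have getU (x : X) : ~ K x -> exists U : set X,
    [/\ open (U : set 'rV[CC R]_n), U x & mu U = 0%E].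
  move=> nKx; apply: contrapT => hc; apply: nKx => U oU Ux.
  apply: contrapT => h; apply: hc; exists U; split => //.
  apply/eqP; rewrite eq_le measure_ge0 andbT leNgt; exact/negP.
have cover : ~` K `<=` \bigcup_k F k.
  move=> x /getU [U [oU Ux mU0]].
  have /nbhs_ballP [e e0 hb] : nbhs x U by exact: open_nbhs_nbhs.
  move: e0 hb; case: e => er ei /=; rewrite ltcE /= => /andP[/eqP ei0 er0] hb.
  subst ei.
  have e6 : 0 < er / 6 by rewrite divr_gt0.
  have /choice [q hq] : forall j : 'I_n, exists qq : rat * rat,
      `|complex.Re (x ord0 j) - ratr qq.1| < er / 6 /\
      `|complex.Im (x ord0 j) - ratr qq.2| < er / 6.
    move=> j.
    have [a ha] := @rat_in_itvoo R (complex.Re (x ord0 j) - er / 6) (complex.Re (x ord0 j) + er / 6) ltac:(lra).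
    have [b hb'] := @rat_in_itvoo R (complex.Im (x ord0 j) - er / 6) (complex.Im (x ord0 j) + er / 6) ltac:(lra).
    exists (a, b) => /=; rewrite !ltr_distl.
    move: ha hb'; rewrite !in_itv /= => /andP[h1 h2] /andP[h3 h4].
    by split; apply/andP; split; lra.
  have [r hr] := @rat_in_itvoo R (er / 3) (er / 2) ltac:(lra).
  move: hr; rewrite in_itv /= => /andP[hr1 hr2].
  pose i : I := (\row_j q j, r).
  have hxe j : `|x ord0 j - emb i.1 ord0 j| < (er / 3)%:C%C.
    have -> : er / 3 = (er / 6) *+ 2 by rewrite mulr2n; field.
    apply: norm_small; rewrite /emb !mxE /=; have [h1 h2] := hq j.
      by rewrite raddfB /=.
    by rewrite raddfB /=.
  have hbx : ball (emb i.1) (ratr r)%:C%C x.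
    apply: mxball; first lra.
    by move=> j; rewrite distrC; apply: lt_trans (hxe j) _; rewrite ltcR.
  have hxb : ball x (er / 3)%:C%C (emb i.1) by apply: mxball => //; lra.
  have sub : ball (emb i.1) (ratr r)%:C%C `<=` U.
    move=> y hy; apply: hb.
    have := ball_triangle hxb hy; apply: le_ball.
    by rewrite -rmorphD lecR; lra.
  have gi : good i by split => //; [lra | exists U].
  exists (pickle i) => //; rewrite /F pickleK.
  by case: pselect.
apply/eqP; rewrite eq_le measure_ge0 andbT.
have mK : measurable ((~` K) : set X).
  apply: open_meas; rewrite openE => x /getU [U [oU Ux mU0]].
  rewrite /interior; apply: (@filterS _ _ _ U); last exact: open_nbhs_nbhs.
  move=> y Uy Ky; have := Ky U oU Uy.
  by move: mU0 => /= ->; rewrite ltxx.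
apply: le_trans (measure_sigma_subadditive _ mF mK cover) _.
by rewrite eseries0.
Qed.

Lemma supp_meas (mu : {measure set X -> \bar R}) :
  measurable (msupport mu : set X).
Proof.
set K := msupport mu.
have getU (x : X) : ~ K x -> exists U : set X,
    [/\ open (U : set 'rV[CC R]_n), U x & mu U = 0%E].
  move=> nKx; apply: contrapT => hc; apply: nKx => U oU Ux.
  apply: contrapT => h; apply: hc; exists U; split => //.
  apply/eqP; rewrite eq_le measure_ge0 andbT leNgt; exact/negP.
rewrite -[K]setCK; apply: measurableC.
apply: open_meas; rewrite openE => x /getU [U [oU Ux mU0]].
rewrite /interior; apply: (@filterS _ _ _ U); last exact: open_nbhs_nbhs.
move=> y Uy Ky; have := Ky U oU Uy.
by move: mU0 => /= ->; rewrite ltxx.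
Qed.
End H.

Theorem mainTheorem2 (R : realType) (n : nat) (f : 'rV[CC R]_n -> CC R)
  (alpha : CC R) :
  (0 < n)%N -> in_polydisc_alg0 f -> alpha != 0 ->
  forall mu : {measure set (borelCn R n) -> \bar R},
    (mu setT < +oo)%E ->
    annihilates_A0 mu ->
    msupport mu `<=` [set z | torus R n z /\ f z = alpha] ->
    mu setT = 0%E.
Proof.
move=> hn hf ha mu mufin hann hsupp.
have hf0 := hann f hf.
have [g [[hgc _] hfg]] := hf.
have mT : measurable (torus R n : set (borelCn R n)) := @closed_meas R n _ (torus_closed R n).
have mK := @supp_meas R n mu.
have KT : msupport mu `<=` torus R n by move=> x /hsupp [].
have hN : mu (torus R n `\` msupport mu) = 0%E.
  apply: (@subset_measure0 _ _ _ mu _ (~` msupport mu)) => //.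
  - exact: measurableD.
  - exact: measurableC.
  - exact: (@supp_null R n mu).
have iRe := @int_const R n mu _ _ _ (complex.Re alpha) mT mK KT hN (@f_meas R n g f _ (@Re_cont R) hgc hfg).
have hKf x : msupport mu x -> f x = alpha by move=> /hsupp [].
have iRe' := iRe (fun x Kx => congr1 (fun z : CC R => complex.Re z) (hKf x Kx)).
have iIm := @int_const R n mu _ _ _ (complex.Im alpha) mT mK KT hN (@f_meas R n g f _ (@Im_cont R) hgc hfg) (fun x Kx => congr1 (fun z : CC R => complex.Im z) (hKf x Kx)).
have muTfin : mu (torus R n) \is a fin_num.
  rewrite ge0_fin_numE ?measure_ge0 //.
  apply: le_lt_trans mufin; apply: le_measure; rewrite ?inE //.
have muTE : mu (torus R n) = (fine (mu (torus R n)))%:E by rewrite fineK.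
move: hf0; rewrite /cintegral /Rintegral iRe' iIm muTE -!EFinM /=.
set m := fine (mu (torus R n)) => H.
have H1 := congr1 (fun z : CC R => complex.Re z) H; have H2 := congr1 (fun z : CC R => complex.Im z) H.
move: H1 H2 => /= H1 H2.
have hr : complex.Re alpha * m = 0 by rewrite -H1; ring.
have hi : complex.Im alpha * m = 0 by rewrite -H2; ring.
have m0 : m = 0.
  apply: contrapT => /eqP mn0.
  move: hr => /eqP; rewrite mulf_eq0 (negbTE mn0) orbF => /eqP ra.
  move: hi => /eqP; rewrite mulf_eq0 (negbTE mn0) orbF => /eqP ia.
  clear -ra ia ha; move: ha.
  by case: alpha ra ia => a b /= -> ->; rewrite eqxx.
have muT0 : mu (torus R n) = 0%E by rewrite muTE -/m m0.
rewrite -(setUv (msupport mu)) measureU //; last 2 first.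
- exact: measurableC.
- by rewrite setICr.
rewrite [X in (_ + X)%E](_ : _ = 0%E); last exact: (@supp_null R n mu).
rewrite adde0; apply/eqP; rewrite eq_le measure_ge0 andbT.
rewrite -muT0; apply: le_measure; rewrite ?inE //.
Qed.
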